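(* Let $\mathcal{C}$ be an $(n,k)$ linear code over $\mathrm{GF}(q^m)$ with rank weight distribution $A_0,\dots,A_n$, and let $d_{\mathrm{R}}'$ be the minimum rank distance of $\mathcal{C}^\perp$. If $\nu<d_{\mathrm{R}}'$ (with $0\le\nu\le n$), then $$\sum_{i=0}^{n-\nu}{n-i\brack\nu}A_i=q^{m(k-\nu)}{n\brack\nu}.$$
   Context: $q$ is a prime power. For $\mathbf{x}\in\mathrm{GF}(q^m)^n$, $\mathrm{rk}(\mathbf{x})$ is the dimension over $\mathrm{GF}(q)$ of the $\mathrm{GF}(q)$-span of its coordinates in $\mathrm{GF}(q^m)$; the rank distance is $d(\mathbf{x},\mathbf{y})=\mathrm{rk}(\mathbf{x}-\mathbf{y})$, and the minimum rank distance of a code is the minimum over pairs of distinct codewords. $A_i$ is the number of codewords of $\mathcal{C}$ of rank $i$. An $(n,k)$ linear code is a $k$-dimensional $\mathrm{GF}(q^m)$-subspace of $\mathrm{GF}(q^m)^n$; $\mathcal{C}^\perp=\{\mathbf{u}:\sum_iu_ic_i=0\ \forall\mathbf{c}\in\mathcal{C}\}$. Gaussian binomial: ${a\brack u}=\prod_{i=0}^{u-1}\frac{q^a-q^i}{q^u-q^i}$ for $0\le u\le a$ (equal to $1$ for $u=0$). *)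

(* Defs.v *)
From HB Require Import structures.
From mathcomp Require Import all_boot all_order all_algebra all_field.
Set Implicit Arguments. Unset Strict Implicit. Unset Printing Implicit Defensive.
Import GRing.Theory.
Local Open Scope ring_scope.

(* Setting: F = GF(q) a finite field, L a finite extension of F of degree m,
   i.e. L = GF(q^m).  [finvect_type L] is L equipped with its canonical
   finType structure (so that vectors over L can be counted). *)

Section RankMetric.
Variables (F : finFieldType) (L : fieldExtType F).
Local Notation Lf := (finvect_type L).

Definition rk (n : nat) (x : 'rV[Lf]_n) : nat :=
  \dim (span [seq (x ord0 j : L) | j <- enum 'I_n] : {vspace L}).

Definition rank_wd (n : nat) (C : {vspace 'rV[Lf]_n}) (i : nat) : nat :=
  #|[set c : 'rV[Lf]_n | (c \in C) && (rk c == i)]|.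

Definition dual_code (n : nat) (C : {vspace 'rV[Lf]_n}) : {set 'rV[Lf]_n} :=
  [set u : 'rV[Lf]_n | [forall c : 'rV[Lf]_n,
     (c \in C) ==> (\sum_(i < n) u ord0 i * c ord0 i == 0)]].

End RankMetric.

Definition gauss_binom (q a u : nat) : rat :=
  \prod_(i < u) ((((q ^ a)%N)%:Q - ((q ^ i)%N)%:Q) / (((q ^ u)%N)%:Q - ((q ^ i)%N)%:Q)).

(* Main.v *)
Require Import Defs.
From HB Require Import structures.
From mathcomp Require Import all_boot all_order all_algebra all_field.
From mathcomp Require Import mxabelem.
From mathcomp Require Import zify.
Import GRing.Theory.
Local Open Scope ring_scope.

Lemma card_pairP (T1 T2 : finType) (P : T1 -> T2 -> bool) :
  #|[set x : T1 * T2 | P x.1 x.2]| = (\sum_(y : T2) #|[set x : T1 | P x y]|)%N.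
Proof.
have E (T : finType) (A : {set T}) : #|A| = (\sum_(x : T) (x \in A : nat))%N.
  by rewrite -sum1_card big_mkcond /=; apply: eq_bigr => x _; case: (x \in A).
set S := [set x : T1 * T2 | P x.1 x.2].
rewrite E; transitivity (\sum_(x : T1) \sum_(y : T2) (((x, y) \in S) : nat))%N.
  by rewrite pair_bigA; apply: eq_bigr => -[].
rewrite exchange_big /=; apply: eq_bigr => y _.
by rewrite E; apply: eq_bigr => x _; rewrite !inE.
Qed.

Lemma card_pairP1 (T1 T2 : finType) (P : T1 -> T2 -> bool) :
  #|[set x : T1 * T2 | P x.1 x.2]| = (\sum_(x : T1) #|[set y : T2 | P x y]|)%N.
Proof.
have E (T : finType) (A : {set T}) : #|A| = (\sum_(x : T) (x \in A : nat))%N.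
  by rewrite -sum1_card big_mkcond /=; apply: eq_bigr => x _; case: (x \in A).
set S := [set x : T1 * T2 | P x.1 x.2].
rewrite E; transitivity (\sum_(x : T1) \sum_(y : T2) (((x, y) \in S) : nat))%N.
  by rewrite pair_bigA; apply: eq_bigr => -[].
apply: eq_bigr => x _.
by rewrite E; apply: eq_bigr => y _; rewrite !inE.
Qed.

Section FreeCount.
Variable F : finFieldType.

Lemma row_free_col (n t : nat) (v : 'rV[F]_n) (H : 'M[F]_(t, n)) :
  row_free (col_mx v H) = row_free H && ~~ (v <= H)%MS.
Proof.
have Hs := mxrank_sum_cap v H.
have rv := rank_leq_row v; have rH := rank_leq_row H.
have rc : \rank (col_mx v H) = \rank (v + H)%MS by rewrite addsmxE.
rewrite /row_free rc.
have capv : (v :&: H <= v)%MS by apply: capmxSl.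
have rcap := mxrankS capv.
apply/eqP/andP => [E | [/eqP E nvH]].
  have r1 : \rank v = 1%N by lia.
  have rt : \rank H = t by lia.
  split; first by rewrite /row_free rt.
  apply/negP => vH.
  have e : (v :&: H :=: v)%MS by apply/capmx_idPl.
  move: Hs; rewrite e; lia.
have v0 : v != 0 by apply: contraNneq nvH => ->; rewrite sub0mx.
have r1 : \rank v = 1%N by apply/eqP; rewrite eqn_leq rv lt0n mxrank_eq0.
have c0 : \rank (v :&: H)%MS = 0%N.
  apply/eqP; move: rcap; rewrite r1 leq_eqVlt ltnS leqn0 => /orP[]//.
  move/eqP=> e1; exfalso; move/negP: nvH; apply.
  have /eqmxP e2 : (v :&: H == v)%MS by rewrite -(mxrank_leqif_eq capv).2 r1 e1.
  by rewrite -e2 capmxSr.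
move: Hs; rewrite c0 r1; move/eqP: E; lia.
Qed.

End FreeCount.

Section FreeCount2.
Variable F : finFieldType.

Lemma count_free (n p : nat) (A : 'M[F]_(p, n)) (t : nat) :
  #|[set H : 'M[F]_(t, n) | row_free H && (H <= A)%MS]|
  = (\prod_(s < t) (#|F| ^ \rank A - #|F| ^ s))%N.
Proof.
elim: t => [|t IH].
  rewrite big_ord0.
  have -> : [set H : 'M[F]_(0, n) | row_free H && (H <= A)%MS] = setT.
    apply/setP => H; rewrite !inE /row_free.
    have -> : H = 0 by apply/matrixP => -[].
    by rewrite mxrank0 sub0mx.
  by rewrite cardsT card_mx.
rewrite big_ord_recr /=.
have cs (v : 'rV[F]_n) (H : 'M[F]_(t, n)) :
  ((col_mx v H : 'M_(t.+1, n)) <= A)%MS = (v <= A)%MS && (H <= A)%MS.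
  exact (col_mx_sub v H A).
pose Ps := [set pr : 'rV[F]_n * 'M[F]_(t, n) |
   (row_free pr.2 && (pr.2 <= A)%MS) && ((pr.1 <= A)%MS && ~~ (pr.1 <= pr.2)%MS)].
have -> : [set H : 'M[F]_(t.+1, n) | row_free H && (H <= A)%MS]
   = (fun pr : 'rV[F]_n * 'M[F]_(t, n) => (col_mx pr.1 pr.2 : 'M[F]_(t.+1, n))) @: Ps.
  apply/setP => H; rewrite inE; apply/idP/imsetP.
    case/andP => fH sHA.
    exists (usubmx (H : 'M_(1 + t, n)), dsubmx (H : 'M_(1 + t, n))); last by rewrite vsubmxK.
    move: fH sHA; rewrite -[H in row_free H](vsubmxK (H : 'M_(1 + t, n))).
    rewrite -[H in (H <= A)%MS](vsubmxK (H : 'M_(1 + t, n))).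
    rewrite row_free_col inE /= => /andP[-> ->]; rewrite cs.
    by case/andP => -> ->.
  case=> -[v H'] /=; rewrite inE /= => /andP[/andP[fH sHA] /andP[svA nvH]] ->.
  by rewrite row_free_col cs fH nvH sHA svA.
rewrite card_imset; last first.
  by move=> [v1 H1] [v2 H2] /= e; case: (@eq_col_mx _ 1 t n v1 H1 v2 H2 e) => -> ->.
rewrite /Ps (@card_pairP _ _ (fun (v : 'rV[F]_n) (H : 'M[F]_(t, n)) => (row_free H && (H <= A)%MS) && ((v <= A)%MS && ~~ (v <= H)%MS))).
rewrite -IH -sum1_card big_distrl /= [RHS]big_mkcond /=.
apply: eq_bigr => H _; rewrite inE.
case: (boolP (row_free H && (H <= A)%MS)) => [/andP[fH sHA] | nH]; last first.
  rewrite /=; apply/eqP; rewrite cards_eq0; apply/eqP/setP => v.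
  rewrite !inE; move: nH; case: (row_free H) =>//=; case: (H <= A)%MS.
rewrite mul1n.
transitivity #|rowg A :\: rowg H|.
  by apply: eq_card => v; rewrite !inE /= andbC.
rewrite (@cardsDS _ (rowg A) (rowg H)).
  by rewrite !card_rowg (eqP fH).
by apply/subsetP => v; rewrite !inE => /submx_trans; apply.
Qed.

End FreeCount2.

Set Implicit Arguments. Unset Strict Implicit. Unset Printing Implicit Defensive.

Section BasisMx.
Variables (K : finFieldType) (n : nat) (U : {vspace 'rV[K]_n}).

Definition bmx : 'M[K]_(\dim U, n) := \matrix_(i < \dim U) (vbasis U)`_i.

Lemma bmx_sub h : (h <= bmx)%MS = (h \in U).
Proof.
apply/idP/idP.
  case/submxP => x ->; rewrite mulmx_sum_row.
  apply: rpred_sum => i _; apply: rpredZ; rewrite rowK.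
  by apply: vbasis_mem; apply: mem_nth; rewrite size_tuple.
move/coord_vbasis => ->; apply/submxP.
exists (\row_i coord (vbasis U) i h); rewrite mulmx_sum_row.
by apply: eq_bigr => i _; rewrite rowK mxE.
Qed.

Lemma bmx_rank : \rank bmx = \dim U.
Proof.
apply: (@expnI #|K|); first exact: finNzRing_gt1.
rewrite -card_rowg -card_vspace; apply: eq_card => h.
by rewrite mem_rowg bmx_sub.
Qed.

Lemma bmx_free : row_free bmx.
Proof. by rewrite /row_free bmx_rank. Qed.

End BasisMx.

Section CountKer.
Variables (K : finFieldType) (n : nat) (C : {vspace 'rV[K]_n}) (nu : nat)
  (Hl : 'M[K]_(nu, n)).

Lemma trick (x : 'rV[K]_(\dim C)) :
  (Hl *m (x *m bmx C)^T == 0) = (x *m (bmx C *m Hl^T) == 0).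
Proof.
by rewrite -trmx_eq0 trmx_mul trmxK mulmxA.
Qed.

Lemma count_ker :
  \rank (bmx C *m Hl^T) = nu ->
  #|[set c : 'rV[K]_n | (c \in C) && (Hl *m c^T == 0)]| = (#|K| ^ (\dim C - nu))%N.
Proof.
move=> rM.
have -> : [set c : 'rV[K]_n | (c \in C) && (Hl *m c^T == 0)]
   = (fun x => x *m bmx C) @: rowg (kermx (bmx C *m Hl^T)).
  apply/setP => c; rewrite inE; apply/idP/imsetP.
    case/andP; rewrite -bmx_sub => /submxP [x ->]; rewrite trick => hx.
    by exists x => //; rewrite mem_rowg sub_kermx.
  case=> x; rewrite mem_rowg sub_kermx -trick => hx ->.
  by rewrite hx andbT -bmx_sub submxMl.
rewrite card_imset; last exact: row_free_inj (bmx_free C).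
by rewrite card_rowg mxrank_ker rM.
Qed.

End CountKer.

Section Main.
Variables (F : finFieldType) (L : fieldExtType F).
Local Notation K := (finvect_type L).

Lemma rk_le (n : nat) (u : 'rV[K]_n) (s : seq L) :
  (forall j, (u 0 j : L) \in <<s>>%VS) -> (rk u <= size s)%N.
Proof.
move=> hs; rewrite /rk; apply: leq_trans (dim_span s).
apply: dimvS; apply/span_subvP => y /mapP [j _ ->]; exact: hs.
Qed.

Lemma rank_M (n : nat) (C : {vspace 'rV[K]_n}) (nu : nat) (H : 'M[F]_(nu, n)) :
  (forall u, u \in dual_code C -> u != 0 -> (nu < rk u)%N) ->
  row_free H ->
  \rank (bmx C *m (map_mx (in_alg K) H)^T) = nu.
Proof.
move=> hd fH; set Hl := map_mx (in_alg K) H; set M := bmx C *m Hl^T.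
apply/eqP; rewrite eqn_leq rank_leq_col /= leqNgt; apply/negP => lt.
have : kermx M^T != 0.
  rewrite -mxrank_eq0 mxrank_ker mxrank_tr; apply/eqP => h.
  have h2 : (nu - \rank M)%N = 0%N by exact: h.
  by move: lt; rewrite -subn_gt0 h2.
case/rowV0Pn => a /sub_kermxP aM a0.
have fHl : row_free Hl by rewrite /row_free mxrank_map.
set u := a *m Hl.
have u0 : u != 0 by rewrite /u mulmx_free_eq0.
have ud : u \in dual_code C.
  rewrite inE; apply/forallP => c; apply/implyP; rewrite -bmx_sub.
  case/submxP => x ->.
  have -> : \sum_(i < n) u 0 i * (x *m bmx C) 0 i = (u *m (x *m bmx C)^T) 0 0.
    by rewrite [RHS]mxE; apply: eq_bigr => i _; rewrite [_^T _ _]mxE.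
  rewrite trmx_mul /u !mulmxA -(mulmxA a) .
  have -> : Hl *m (bmx C)^T = M^T by rewrite /M trmx_mul trmxK.
  by rewrite aM !mul0mx mxE.
have := hd u ud u0.
have : (rk u <= size [seq (a ord0 t : L) | t <- enum 'I_nu])%N.
  apply: rk_le => j; rewrite /u mxE.
  apply: rpred_sum => t _; rewrite /Hl mxE.
  rewrite mulr_algr; apply: rpredZ; apply: memv_span.
  by apply: map_f; rewrite mem_enum.
rewrite size_map size_enum_ord; lia.
Qed.

Lemma count_c (n : nat) (c : 'rV[K]_n) (nu : nat) :
  #|[set H : 'M[F]_(nu, n) | row_free H && (map_mx (in_alg K) H *m c^T == 0)]|
  = (\prod_(s < nu) (#|F| ^ (n - rk c) - #|F| ^ s))%N.
Proof.
pose phi (h : 'rV[F]_n) : L := \sum_j h 0 j *: (c 0 j : L).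
have lin : linear phi.
  move=> a u v; rewrite /phi scaler_sumr -big_split; apply: eq_bigr => j _.
  by rewrite !mxE scalerDl scalerA.
pose fL : {linear 'rV[F]_n -> L} := HB.pack phi (GRing.isLinear.Build _ _ _ _ phi lin).
set f := linfun fL.
have fE h : f h = phi h := lfunE fL h.
set S := lker f.
have dS : \dim S = (n - rk c)%N.
  have := limg_ker_dim f fullv; rewrite capfv dimvf dim_matrix mul1r.
  have -> : (f @: fullv)%VS = span [seq (c ord0 j : L) | j <- enum 'I_n].
    apply/eqP; rewrite eqEsubv; apply/andP; split.
      apply/subvP => w /memv_imgP [h _ ->]; rewrite fE; apply: rpred_sum => j _.
      by apply: rpredZ; apply: memv_span; apply: map_f; rewrite mem_enum.
    apply/span_subvP => w /mapP [j _ ->].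
    have -> : (c ord0 j : L) = f (delta_mx 0 j).
      rewrite fE /phi (bigD1 j) //= big1 ?addr0.
        by rewrite mxE !eqxx scale1r.
      by move=> i ij; rewrite mxE eqxx /= (negbTE ij) scale0r.
    by apply: memv_img; apply: memvf.
  move=> h; have h2 : (\dim S + rk c)%N = n by exact: h.
  lia.
have key (H : 'M[F]_(nu, n)) i : (map_mx (in_alg K) H *m c^T) i 0 = phi (row i H) :> L.
  rewrite !mxE /phi; apply: eq_bigr => j _; rewrite !mxE.
  by rewrite mulr_algl.
have -> : [set H : 'M[F]_(nu, n) | row_free H && (map_mx (in_alg K) H *m c^T == 0)]
   = [set H : 'M[F]_(nu, n) | row_free H && (H <= bmx S)%MS].
  apply/setP => H; rewrite !inE; congr (_ && _); apply/idP/idP.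
    move/eqP => E; apply/row_subP => i; rewrite bmx_sub memv_ker fE.
    by rewrite -key E mxE.
  move/row_subP => hr; apply/eqP/matrixP => i j'; rewrite (ord1 j') [RHS]mxE key.
  by move: (hr i); rewrite bmx_sub memv_ker fE => /eqP ->.
by rewrite count_free bmx_rank dS.
Qed.

End Main.

Section Main2.
Variables (F : finFieldType) (L : fieldExtType F).
Local Notation K := (finvect_type L).

Lemma rk_leq_n (n : nat) (c : 'rV[K]_n) : (rk c <= n)%N.
Proof.
by rewrite /rk; apply: leq_trans (dim_span _) _; rewrite size_map size_enum_ord.
Qed.

Lemma nat_identity (n : nat) (C : {vspace 'rV[K]_n}) (nu : nat) :
  (forall u, u \in dual_code C -> u != 0 -> (nu < rk u)%N) ->
  (\sum_(c : 'rV[K]_n) (c \in C) * \prod_(s < nu) (#|F| ^ (n - rk c) - #|F| ^ s))%N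
  = ((\prod_(s < nu) (#|F| ^ n - #|F| ^ s)) * #|K| ^ (\dim C - nu))%N.
Proof.
move=> hd.
pose P := [set p : 'M[F]_(nu, n) * 'rV[K]_n |
  (row_free p.1 && (p.2 \in C)) && (map_mx (in_alg K) p.1 *m p.2^T == 0)].
have E1 : #|P| = (\sum_(c : 'rV[K]_n) (c \in C) * \prod_(s < nu) (#|F| ^ (n - rk c) - #|F| ^ s))%N.
  rewrite /P (@card_pairP _ _ (fun (H : 'M[F]_(nu, n)) (c : 'rV[K]_n) =>
    (row_free H && (c \in C)) && (map_mx (in_alg K) H *m c^T == 0))).
  apply: eq_bigr => c _; case: (boolP (c \in C)) => cC.
    by rewrite mul1n -count_c; apply: eq_card => H; rewrite !inE andbT.
  rewrite mul0n; apply/eqP; rewrite cards_eq0; apply/eqP/setP => H.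
  by rewrite !inE ?andbF.
have E2 : #|P| = ((\prod_(s < nu) (#|F| ^ n - #|F| ^ s)) * #|K| ^ (\dim C - nu))%N.
  rewrite /P (@card_pairP1 _ _ (fun (H : 'M[F]_(nu, n)) (c : 'rV[K]_n) =>
    (row_free H && (c \in C)) && (map_mx (in_alg K) H *m c^T == 0))).
  have := @count_free F n n 1%:M nu; rewrite mxrank1 => <-.
  rewrite -sum1_card big_distrl /= [RHS]big_mkcond /=.
  apply: eq_bigr => H _; rewrite inE submx1 andbT.
  case: (boolP (row_free H)) => fH.
    rewrite mul1n -(count_ker (rank_M hd fH)); apply: eq_card => c.
    by rewrite !inE /=.
  apply/eqP; rewrite cards_eq0; apply/eqP/setP => c.
  by rewrite !inE.
by rewrite -E1 E2.
Qed.

End Main2.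

Unset Implicit Arguments.

Lemma Qn (n : nat) : n%:Q = n%:R.
Proof. by []. Qed.

Theorem corollary3 (F : finFieldType) (L : fieldExtType F)
  (n : nat) (C : {vspace 'rV[finvect_type L]_n}) (nu : nat) :
  (nu <= n)%N ->
  (* nu < d_R', the minimum rank distance of the dual code
     (= minimum rank of a nonzero dual codeword, by linearity) *)
  (forall u, u \in dual_code C -> u != 0 -> (nu < rk u)%N) ->
  \sum_(i < (n - nu).+1) gauss_binom #|F| (n - i) nu * (rank_wd C i)%:Q
  = (#|F|%:Q) ^ ((\dim {:L} * \dim C)%:Z - (\dim {:L} * nu)%:Z)
    * gauss_binom #|F| n nu.
Proof.
move=> hnu hd.
set q := #|F|.
have q1 : (1 < q)%N := finNzRing_gt1 F.
have qK : #|finvect_type L| = (q ^ \dim {:L})%N.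
  have -> : #|finvect_type L| = #|(fullv : {vspace finvect_type L})|.
    by apply: eq_card => x; rewrite memvf.
  by rewrite card_vspace !dimvf.
have nuk : (nu <= \dim C)%N.
  have fP : row_free (pid_mx nu : 'M[F]_(nu, n)) by rewrite /row_free rank_pid_mx.
  rewrite -(rank_M hd fP); exact: rank_leq_row.
have NI := nat_identity hd.
pose g := fun i => (\prod_(s < nu) (q ^ (n - i) - q ^ s))%N.
have Hsum : (\sum_(c : 'rV[finvect_type L]_n) (c \in C) * g (rk c))%N
   = (\sum_(i < (n - nu).+1) g i * rank_wd C i)%N.
  transitivity (\sum_(i < n.+1) g i * rank_wd C i)%N.
    transitivity (\sum_(c : 'rV[finvect_type L]_n) \sum_(i < n.+1) (((c \in C) && (rk c == i)) * g i))%N.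
      apply: eq_bigr => c _.
      have rc : (rk c < n.+1)%N by rewrite ltnS rk_leq_n.
      rewrite (bigD1 (Ordinal rc)) //= eqxx andbT big1 ?addn0 //.
      move=> i ne; suff -> : (rk c == i) = false by rewrite andbF.
      by apply/negbTE; apply: contra ne => /eqP e; apply/eqP/val_inj.
    rewrite exchange_big /=; apply: eq_bigr => i _.
    rewrite -big_distrl /= mulnC; congr (_ * _)%N.
    rewrite /rank_wd -sum1_card [RHS]big_mkcond /=; apply: eq_bigr => c _.
    by rewrite inE; case: (_ && _).
  rewrite [RHS](big_ord_widen _ (fun i => g i * rank_wd C i)%N (_ : (n - nu).+1 <= n.+1)%N); last first.
    by rewrite ltnS leq_subr.
  rewrite [LHS](bigID (fun i : 'I_n.+1 => (i < (n - nu).+1)%N)) /= [X in (_ + X)%N]big1 ?addn0 //.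
  move=> i; rewrite -leqNgt => hi.
  have hs : (n - i < nu)%N by have := ltn_ord i; lia.
  by rewrite /g (bigD1 (Ordinal hs)) //= subnn mul0n.
set m := \dim {:L}; set k := \dim C.
set D := \prod_(s < nu) (((q ^ nu)%N)%:R - ((q ^ s)%N)%:R) : rat.
have gb a : (nu <= a)%N -> gauss_binom q a nu = ((\prod_(s < nu) (q ^ a - q ^ s))%N)%:R / D.
  move=> ha; rewrite /gauss_binom; under eq_bigr do rewrite !Qn.
  rewrite prodf_div natr_prod; congr (_ / _); apply: eq_bigr => s _.
  rewrite natrB // leq_pexp2l ?(ltnW q1) //.
  exact: leq_trans (ltnW (ltn_ord s)) ha.
under eq_bigr do rewrite Qn.
rewrite Qn.
rewrite (eq_bigr (fun i : 'I_(n - nu).+1 => ((g i * rank_wd C i)%N)%:R / D)); last first.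
  move=> i _; rewrite gb; last by have := ltn_ord i; lia.
  by rewrite natrM mulrAC.
rewrite -mulr_suml -natr_sum -Hsum NI gb //.
rewrite subzn; last by rewrite leq_mul2l nuk orbT.
rewrite /exprz -natrX qK -expnM mulnBr natrM.
rewrite [RHS]mulrA; congr (_ * _); exact: mulrC.
Qed.
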